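(* In the setting below, suppose the persistent excitation assumption and the inexact disturbance bound assumption hold, and let $\Theta_t$ be the fixed-complexity parameter set with periodic update. Then for every $\epsilon>0$, every $\theta\in\Theta_0$ such that $[M_\Theta]_i(\theta-\theta^\ast)\ge\epsilon+\rho N_u\tau/\beta$ for some $i\in\{1,\dots,r\}$, and every $t\in\mathbb{N}_{\ge0}$, $$\Pr\{\theta\in\Theta_t\}\ \le\ \Bigl\{1-\Bigl[p_w\Bigl(\frac{\epsilon\beta}{N_u\tau}\Bigr)\Bigr]^{N_u}\Bigr\}^{\lfloor t/N_u\rfloor}.$$
   Context: Setting: $\theta^\ast\in\mathbb{R}^p$ is a fixed (unknown) parameter vector. $\mathcal{W}=\{w\in\mathbb{R}^{n_x}:\Pi_w w\le\pi_w\}$ is a compact convex polytope with $\pi_w>0$. The disturbances $w_0,w_1,\dots$ are independent random vectors in $\mathbb{R}^{n_x}$. $D_0,D_1,\dots\in\mathbb{R}^{n_x\times p}$ is a given (non-random) sequence of regressor matrices. For $t\ge1$ the (random) unfalsified parameter set is $\Delta_t=\{\theta\in\mathbb{R}^p: D_{t-1}(\theta^\ast-\theta)+w_{t-1}\in\mathcal{W}\}$. $\|\cdot\|$ is the Euclidean norm (induced 2-norm for matrices); $\mathcal{B}=\{x\in\mathbb{R}^{n_x}:\|x\|\le1\}$; $\oplus$ is Minkowski sum; $[M]_i$ is the $i$th row of $M$. Persistent excitation assumption: there exist $\tau>0$, $\beta>0$ and an integer $N_u\ge\lceil p/n_x\rceil$ such that for every $t\ge0$, $\|D_t\|\le\tau$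 and $\sum_{j=t}^{t+N_u-1}D_j^\top D_j\succeq\beta I$. Inexact disturbance bound assumption: there exist a compact set $\Omega\subset\mathbb{R}^{n_x}$ and $\rho>0$ with $\Omega\subseteq\mathcal{W}\subseteq\Omega\oplus\rho\mathcal{B}$, such that $w_t\in\Omega$ for all $t$, and a function $p_w:(0,\infty)\to(0,1]$ such that for all $w^0\in\partial\Omega$ (boundary of $\Omega$), all $\epsilon>0$ and all $t\ge0$, $\Pr\{\|w_t-w^0\|<\epsilon\}\ge p_w(\epsilon)$. Fixed-complexity parameter set with periodic update: $M_\Theta\in\mathbb{R}^{r\times p}$ has rows of unit Euclidean norm and is such that $\Theta(\mu):=\{\theta:M_\Theta\theta\le\mu\}$ is bounded for every $\mu\in\mathbb{R}^r$; $\Theta_0=\Theta(\mu_0)$ contains $\theta^\ast$. For $t\ge1$: if $t=kN_u$ for some integer $k\ge1$, then $\Theta_t=\Theta(\mu_t)$ with $[\mu_t]_i=\max\{[M_\Theta]_i\theta:\theta\in\Theta_{t-N_u}\cap\bigcap_{j=t-N_u+1}^t\Delta_j\}$ for $i=1,\dots,r$; otherwise $\Theta_t=\Theta_{t-1}$. *)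

(* Defs.v *)
From HB Require Import structures.
From mathcomp Require Import all_boot all_order all_algebra.
From mathcomp Require Import all_classical all_reals all_analysis.
Set Implicit Arguments. Unset Strict Implicit. Unset Printing Implicit Defensive.
Import Order.TTheory GRing.Theory Num.Theory.
Import numFieldNormedType.Exports.
Local Open Scope classical_set_scope.
Local Open Scope ring_scope.

Definition enorm (R : realType) (n : nat) (x : 'cV[R]_n) : R :=
  Num.sqrt (\sum_(i < n) x i 0 ^+ 2).

(* Induced 2-norm bound: ||D|| <= tau  iff  ||D x|| <= tau ||x|| for all x. *)
Definition opnorm_le (R : realType) (m n : nat) (D : 'M[R]_(m, n)) (tau : R) :=
  forall x : 'cV[R]_n, enorm (D *m x) <= tau * enorm x.

Definition loewner_ge (R : realType) (n : nat) (A B : 'M[R]_n) :=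
  forall x : 'cV[R]_n, 0 <= (x^T *m (A - B) *m x) 0 0.

Definition cv_le (R : realType) (n : nat) (x y : 'cV[R]_n) :=
  forall i, x i 0 <= y i 0.

Definition borel_cv (R : realType) (n : nat) (B : set 'cV[R]_n) : Prop :=
  (<<s [set A : set 'cV[R]_n | open A] >>) B.

Definition random_vector d (T : measurableType d) (R : realType) (n : nat)
  (X : T -> 'cV[R]_n) : Prop :=
  forall B, borel_cv B -> measurable (X @^-1` B).

Definition mutually_independent d (T : measurableType d) (R : realType)
  (P : probability T R) (n : nat) (w : nat -> T -> 'cV[R]_n) : Prop :=
  forall (s : seq nat) (B : nat -> set 'cV[R]_n),
    uniq s -> (forall i, i \in s -> borel_cv (B i)) ->
    P (\big[setI/setT]_(i <- s) (w i @^-1` B i)) =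
    (\prod_(i <- s) P (w i @^-1` B i))%E.

Definition boundary (T : topologicalType) (A : set T) : set T :=
  closure A `\` A°.

Definition bounded_cv (R : realType) (n : nat) (A : set 'cV[R]_n) : Prop :=
  exists M : R, forall x, A x -> enorm x <= M.

Definition is_max (R : realType) (S : set R) (x : R) : Prop :=
  S x /\ (forall y, S y -> y <= x).

Definition Theta_of (R : realType) (r p : nat) (M : 'M[R]_(r, p)) (mu : 'cV[R]_r)
  : set 'cV[R]_p := [set th | cv_le (M *m th) mu].

(* Unfalsified set Delta_t, given D_{t-1} and w_{t-1}. *)
Definition Delta_set (R : realType) (nx p q : nat) (Pi : 'M[R]_(q, nx))
  (pi : 'cV[R]_q) (Dm : 'M[R]_(nx, p)) (thstar : 'cV[R]_p) (wm : 'cV[R]_nx)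
  : set 'cV[R]_p :=
  [set th | cv_le (Pi *m (Dm *m (thstar - th) + wm)) pi].

(* Outer probability: every event E is contained in a measurable set of
   probability at most b (equals P E <= b when E is measurable). *)
Definition outer_prob_le d (T : measurableType d) (R : realType)
  (P : probability T R) (E : set T) (b : R) : Prop :=
  exists2 A : set T, measurable A /\ E `<=` A & (P A <= b%:E)%E.

(* Main.v *)
Set Warnings "-notation-overridden,-ambiguous-paths,-deprecated".
Require Import Defs.
Set Implicit Arguments. Unset Strict Implicit. Unset Printing Implicit Defensive.
From HB Require Import structures.
From mathcomp Require Import all_boot all_order all_algebra.
From mathcomp Require Import all_classical all_reals all_analysis.
From mathcomp Require Import ring lra.
Import Order.TTheory GRing.Theory Num.Theory.
Import numFieldNormedType.Exports.
Local Open Scope classical_set_scope.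
Local Open Scope ring_scope.
Section LA.
Variable R : realType.

Definition dot {n : nat} (a b : 'cV[R]_n) : R := \sum_i a i 0 * b i 0.

Lemma dotC n (a b : 'cV[R]_n) : dot a b = dot b a.
Proof. by apply: eq_bigr => i _; rewrite mulrC. Qed.

Lemma dotDr n (a b c : 'cV[R]_n) : dot a (b + c) = dot a b + dot a c.
Proof. by rewrite /dot -big_split; apply: eq_bigr => i _; rewrite mxE mulrDr. Qed.

Lemma dotNr n (a b : 'cV[R]_n) : dot a (- b) = - dot a b.
Proof. by rewrite /dot -sumrN; apply: eq_bigr => i _; rewrite mxE mulrN. Qed.

Lemma dotBr n (a b c : 'cV[R]_n) : dot a (b - c) = dot a b - dot a c.
Proof. by rewrite dotDr dotNr. Qed.

Lemma dotZr n (a b : 'cV[R]_n) k : dot a (k *: b) = k * dot a b.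
Proof. by rewrite /dot mulr_sumr; apply: eq_bigr => i _; rewrite mxE mulrCA. Qed.

Lemma dot0l n (b : 'cV[R]_n) : dot 0 b = 0.
Proof. by rewrite /dot big1 // => i _; rewrite mxE mul0r. Qed.

Lemma dot_ge0 n (a : 'cV[R]_n) : 0 <= dot a a.
Proof. by apply: sumr_ge0 => i _; rewrite -expr2 sqr_ge0. Qed.

Lemma enorm_ge0 n (a : 'cV[R]_n) : 0 <= enorm a.
Proof. exact: sqrtr_ge0. Qed.

Lemma enorm_sq n (a : 'cV[R]_n) : enorm a ^+ 2 = dot a a.
Proof.
rewrite /enorm sqr_sqrtr; last by apply: sumr_ge0 => i _; rewrite sqr_ge0.
by apply: eq_bigr => i _; rewrite expr2.
Qed.

Lemma enormE n (a : 'cV[R]_n) : enorm a = Num.sqrt (dot a a).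
Proof. by rewrite /enorm; congr Num.sqrt; apply: eq_bigr => i _; rewrite expr2. Qed.

Lemma dot_eq0 n (a : 'cV[R]_n) : dot a a = 0 -> a = 0.
Proof.
move=> h; apply/matrixP => i j; rewrite ord1 mxE.
have H : forall k : 'I_n, true -> 0 <= a k 0 * a k 0.
  by move=> k _; rewrite -expr2 sqr_ge0.
have := @psumr_eq0P _ _ predT (fun i => a i 0 * a i 0) H h i isT.
by move=> /eqP; rewrite mulf_eq0 orbb => /eqP.
Qed.

Lemma dot_sq_le n (a b : 'cV[R]_n) : dot a b ^+ 2 <= dot a a * dot b b.
Proof.
have key t : 0 <= t ^+ 2 * dot a a - 2 * t * dot a b + dot b b.
  have -> : t ^+ 2 * dot a a - 2 * t * dot a b + dot b b
      = \sum_i (t * a i 0 - b i 0) ^+ 2.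
    rewrite /dot mulr_sumr mulr_sumr -sumrN -!big_split /=.
    by apply: eq_bigr => i _; ring.
  by apply: sumr_ge0 => i _; rewrite sqr_ge0.
have [A0|A0] := eqVneq (dot a a) 0.
  by rewrite (dot_eq0 A0) dot0l expr0n /= dot0l mul0r.
have Apos : 0 < dot a a by rewrite lt_neqAle eq_sym A0 dot_ge0.
have := key (dot a b / dot a a).
set A := dot a a; set C := dot a b; set B := dot b b => h.
have e : (C / A) ^+ 2 * A - 2 * (C / A) * C + B = (A * B - C ^+ 2) / A.
  by field; rewrite gt_eqF.
rewrite e in h; rewrite -subr_ge0.
have Ai : 0 < A^-1 by rewrite invr_gt0.
by rewrite -(pmulr_rge0 _ Ai) mulrC.
Qed.

Lemma CS n (a b : 'cV[R]_n) : dot a b <= enorm a * enorm b.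
Proof.
rewrite !enormE -sqrtrM ?dot_ge0 //.
apply: (le_trans (ler_norm _)).
rewrite -(sqrtr_sqr (dot a b)) ler_sqrt ?dot_sq_le //.
by rewrite mulr_ge0 ?dot_ge0.
Qed.

Lemma mxdot n (u v : 'cV[R]_n) : (u^T *m v) 0 0 = dot u v.
Proof. by rewrite mxE; apply: eq_bigr => i _; rewrite mxE. Qed.

Lemma mxrow_dot r p (M : 'M[R]_(r, p)) (x : 'cV[R]_p) i :
  (M *m x) i 0 = dot (row i M)^T x.
Proof. by rewrite mxE; apply: eq_bigr => k _; rewrite !mxE. Qed.

Lemma dotMl m n (A : 'M[R]_(m, n)) u v : dot u (A *m v) = dot (A^T *m u) v.
Proof.
by rewrite -!mxdot trmx_mul trmxK mulmxA.
Qed.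

Lemma enormN n (a : 'cV[R]_n) : enorm (- a) = enorm a.
Proof. by rewrite !enormE dotNr dotC dotNr opprK. Qed.


Lemma dot_sumr n (I : Type) (s : seq I) (P : pred I) (a : 'cV[R]_n) f :
  dot a (\sum_(j <- s | P j) f j) = \sum_(j <- s | P j) dot a (f j).
Proof.
elim: s => [|x s IH]; first by rewrite !big_nil /dot big1 // => i _; rewrite mxE mulr0.
by rewrite !big_cons; case: (P x); rewrite ?dotDr IH.
Qed.

Lemma loew_quad p (G : 'M[R]_p) beta (x : 'cV[R]_p) :
  loewner_ge G beta%:M -> beta * dot x x <= dot x (G *m x).
Proof.
move=> /(_ x); rewrite -mulmxA mxdot mulmxBl mul_scalar_mx dotBr.
by rewrite dotZr subr_ge0.
Qed.

Lemma loew_unit p (G : 'M[R]_p) beta :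
  0 < beta -> loewner_ge G beta%:M -> G \in unitmx.
Proof.
move=> b0 HL; rewrite unitmxE unitfE; apply/negP => /det0P [v vn0 vG].
have := loew_quad v^T HL.
rewrite -[dot v^T (G *m v^T)]mxdot trmxK mulmxA vG mul0mx mxE => h.
have : dot v^T v^T = 0.
  apply/eqP; rewrite eq_le dot_ge0 andbT.
  by rewrite -(pmulr_rle0 _ b0).
move=> /dot_eq0 /(congr1 trmx); rewrite trmxK trmx0 => v0.
by rewrite v0 eqxx in vn0.
Qed.

Lemma Gdot nx p (D : nat -> 'M[R]_(nx, p)) t0 N (x y : 'cV[R]_p) :
  dot x ((\sum_(t0 <= j < t0 + N) (D j)^T *m D j) *m y)
  = \sum_(t0 <= j < t0 + N) dot (D j *m x) (D j *m y).
Proof.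
rewrite mulmx_suml dot_sumr; apply: eq_bigr => j _.
by rewrite -mulmxA dotMl trmxK.
Qed.

Lemma core nx p (D : nat -> 'M[R]_(nx, p)) t0 N tau beta rho e d
   (m v delta : 'cV[R]_p) (wj w0j xj oj : nat -> 'cV[R]_nx) :
  enorm m = 1 -> 0 < beta -> 0 < tau -> (0 < N)%N -> d < e -> 0 <= rho ->
  0 <= d ->
  (forall j, opnorm_le (D j) tau) ->
  loewner_ge (\sum_(t0 <= j < t0 + N) (D j)^T *m D j) beta%:M ->
  (\sum_(t0 <= j < t0 + N) (D j)^T *m D j) *m v = m ->
  (forall j, (t0 <= j < t0 + N)%N ->
     [/\ D j *m delta = wj j - xj j, enorm (xj j - oj j) <= rho,
         enorm (wj j - w0j j) <= d &
         dot (D j *m v) (w0j j) <= dot (D j *m v) (oj j)]) ->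
  dot m delta < N%:R * tau / beta * (e + rho).
Proof.
set G := \sum_(_ <= _ < _) _.
move=> m1 b0 t0' N0 de r0 d0 Hop HL Gv H.
have vb : enorm v <= beta^-1.
  have := loew_quad v HL; rewrite Gv -enorm_sq.
  have := CS v m; rewrite m1 mulr1 => h1 h2.
  have h3 := le_trans h2 h1.
  have [v0|vp] := eqVneq (enorm v) 0; first by rewrite v0 invr_ge0 ltW.
  have vpos : 0 < enorm v by rewrite lt_neqAle eq_sym vp enorm_ge0.
  rewrite -(ler_pM2l b0) mulfV ?gt_eqF //.
  rewrite expr2 mulrA in h3.
  by rewrite -(ler_pM2r vpos) mul1r.
have -> : dot m delta = \sum_(t0 <= j < t0 + N) dot (D j *m v) (D j *m delta).
  rewrite dotC -Gv Gdot; apply: eq_bigr => j _; exact: dotC.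
apply: (@le_lt_trans _ _ (\sum_(t0 <= j < t0 + N) (tau * enorm v * (d + rho)))).
  rewrite big_nat_cond [X in _ <= X]big_nat_cond; apply: ler_sum => j /andP[jr _].
  have [e1 e2 e3 e4] := H j jr.
  rewrite e1.
  have -> : wj j - xj j = (wj j - w0j j) + (w0j j - oj j) + - (xj j - oj j).
    by rewrite opprB !subrKA.
  rewrite (dotDr _ (wj j - w0j j + (w0j j - oj j))) (dotDr _ (wj j - w0j j)).
  have na : enorm (D j *m v) <= tau * enorm v by apply: Hop.
  have na0 := enorm_ge0 (D j *m v).
  have c1 := CS (D j *m v) (wj j - w0j j).
  have c3 := CS (D j *m v) (- (xj j - oj j)); rewrite enormN in c3.
  have c2 : dot (D j *m v) (w0j j - oj j) <= 0 by rewrite dotBr subr_le0.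
  have n1 := enorm_ge0 (wj j - w0j j).
  have n2 := enorm_ge0 (xj j - oj j).
  have p1 : enorm (D j *m v) * enorm (wj j - w0j j) <= tau * enorm v * d.
    by apply: ler_pM.
  have p2 : enorm (D j *m v) * enorm (xj j - oj j) <= tau * enorm v * rho.
    by apply: ler_pM.
  rewrite mulrDr; lra.
rewrite sumr_const_nat addKn.
have vb' : tau * enorm v * (d + rho) <= tau / beta * (d + rho).
  by rewrite ler_wpM2r ?addr_ge0 // ler_wpM2l // ltW.
rewrite -mulr_natl.
have Np : 0 < (N%:R : R) by rewrite ltr0n.
apply: (@le_lt_trans _ _ (N%:R * (tau / beta * (d + rho)))).
  by rewrite -(mulr_natl (tau * enorm v * (d + rho))) ler_wpM2l ?ler0n.
have -> : N%:R * 1 * tau / beta * (e + rho) = N%:R * (tau / beta * (e + rho)).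
  by rewrite mulr1 !mulrA.
by rewrite ltr_pM2l // ltr_pM2l ?divr_gt0 // ltrD2r.
Qed.


Lemma dot_continuous n (a : 'cV[R]_n) : continuous (fun x : 'cV[R]_n => dot a x).
Proof.
rewrite /dot; apply: (@continuous_big _ _ _ _ _ add_continuous) => i _.
move=> x; apply: continuousM; first exact: cst_continuous.
exact: coord_continuous.
Qed.

Lemma bmin nx (Om : set 'cV[R]_nx) : (0 < nx)%N -> compact Om -> Om !=set0 ->
  forall a : 'cV[R]_nx, exists w0, boundary Om w0 /\
     forall o, Om o -> dot a w0 <= dot a o.
Proof.
move=> nx0 cOm Om0 a.
pose a' : 'cV[R]_nx := if a == 0 then const_mx 1 else a.
have a'0 : a' != 0.
  rewrite /a'; case: (a =P 0) => [_|/eqP //].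
  apply/eqP => /matrixP /(_ (Ordinal nx0) 0) /eqP.
  by rewrite !mxE oner_eq0.
have [c cOmi cmin] := compact_EVT_min Om0 cOm
   (continuous_subspaceT (@dot_continuous _ a')).
have cOm' : Om c by rewrite inE in cOmi.
exists c; split; last first.
  move=> o oOm; rewrite /a' in cmin; case: eqP cmin => [-> _|_ h].
    by rewrite !dot0l.
  by apply: h; rewrite inE.
split; first exact: subset_closure.
move=> /= cint.
have cv : (fun t : R => c - t *: a') @ (nbhs (0:R)) --> c.
  rewrite -[X in _ --> X]subr0; apply: cvgB; first exact: cvg_cst.
  rewrite -(scale0r a'); apply: cvgZr_tmp; exact: cvg_id.
have := cv Om cint => /nbhs_ballP [eps eps0 Hb].
have hb : ball (0:R) eps (eps / 2).
  rewrite /ball /= sub0r normrN ger0_norm ?divr_ge0 ?ltW //.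
  by rewrite ltr_pdivrMr // ltr_pMr // ltr1n.
have := Hb _ hb => /= hO.
have := cmin _ (mem_set hO).
rewrite dotBr dotZr.
have : 0 < dot a' a'.
  rewrite lt_neqAle dot_ge0 andbT eq_sym; apply/negP => /eqP /dot_eq0 h.
  by rewrite h eqxx in a'0.
have : 0 < eps / 2 by rewrite divr_gt0.
move=> h1 h2 h3. nra.
Qed.

End LA.

Section Prob.
Context (R : realType) (d : measure_display) (T : measurableType d)
  (P : probability T R) (nx : nat) (w : nat -> T -> 'cV[R]_nx).
Hypothesis wrv : forall t, random_vector (w t).
Hypothesis wind : mutually_independent P w.

Definition pr (A : set T) : R := fine (P A).

Lemma prE A : measurable A -> P A = (pr A)%:E.
Proof. by move=> mA; rewrite /pr fineK // fin_num_measure. Qed.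

Lemma pr_ge0 A : 0 <= pr A.
Proof. by rewrite /pr fine_ge0 // measure_ge0. Qed.

Lemma pr_le1 A : measurable A -> pr A <= 1.
Proof. by move=> mA; have := probability_le1 P mA; rewrite prE // lee_fin. Qed.

Definition Rect (s : seq nat) (B : nat -> set 'cV[R]_nx) : set T :=
  \big[setI/setT]_(i <- s) (w i @^-1` B i).

Lemma Rect_meas s B : (forall i, i \in s -> borel_cv (B i)) -> measurable (Rect s B).
Proof.
elim: s => [|x s IH] HB; first by rewrite /Rect big_nil; exact: measurableT.
rewrite /Rect big_cons; apply: measurableI.
  by apply: wrv; apply: HB; rewrite mem_head.
by apply: IH => i iS; apply: HB; rewrite in_cons iS orbT.
Qed.

Lemma pr_Rect s B : uniq s -> (forall i, i \in s -> borel_cv (B i)) ->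
  pr (Rect s B) = \prod_(i <- s) pr (w i @^-1` B i).
Proof.
move=> us HB; rewrite /pr /Rect (wind us HB).
rewrite (eq_big_seq (fun i => (pr (w i @^-1` B i))%:E)); last first.
  by move=> i iS; rewrite prE //; apply: wrv; apply: HB.
by rewrite prodEFin.
Qed.

Lemma prD A B : measurable A -> measurable B -> pr (A `\` B) = pr A - pr (A `&` B).
Proof.
move=> mA mB; rewrite /pr measureD //; last first.
  by apply: (le_lt_trans (probability_le1 P mA)); rewrite ltry.
rewrite fineB // fin_num_measure //; exact: measurableI.

Qed.

Variables (N : nat) (Bb : nat -> set 'cV[R]_nx).
Hypothesis Bborel : forall j, borel_cv (Bb j).

Definition Ek (k : nat) : set T := Rect (iota (k * N) N) Bb.
Definition Fk (K : nat) : set T := \big[setI/setT]_(0 <= k < K) ~` Ek k.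

Lemma Ek_meas k : measurable (Ek k).
Proof. by apply: Rect_meas => i _; exact: Bborel. Qed.

Lemma Fk_meas K : measurable (Fk K).
Proof.
elim: K => [|K IH]; first by rewrite /Fk big_geq //; exact: measurableT.
rewrite /Fk big_nat_recr //=; apply: measurableI => //.
exact/measurableC/Ek_meas.
Qed.

Lemma claim K : forall s B, uniq s -> (forall i, i \in s -> borel_cv (B i)) ->
  (forall i, i \in s -> (K * N <= i)%N) ->
  pr (Rect s B `&` Fk K) = pr (Rect s B) * \prod_(0 <= k < K) (1 - pr (Ek k)).
Proof.
elim: K => [|K IH] s B us HB Hs.
  by rewrite /Fk !big_geq // setIT mulr1.
have mR := Rect_meas HB.
rewrite /Fk big_nat_recr //= -/(Fk K) setIA -setDE.
rewrite prD; [|exact: measurableI mR (Fk_meas K)|exact: Ek_meas].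
pose B' i := if i \in s then B i else Bb i.
have HB' : forall i, i \in s ++ iota (K * N) N -> borel_cv (B' i).
  move=> i _; rewrite /B'; case: ifP => iS; [exact: HB | exact: Bborel].
have disj : forall i, i \in iota (K * N) N -> i \notin s.
  move=> i; rewrite mem_iota => /andP [_ h]; apply/negP => /Hs.
  by rewrite mulSn addnC leqNgt h.
have us' : uniq (s ++ iota (K * N) N).
  rewrite cat_uniq us iota_uniq andbT /=; apply/hasPn => i /disj //.
have eqR : Rect s B `&` Fk K `&` Ek K = Rect (s ++ iota (K * N) N) B' `&` Fk K.
  rewrite /Rect big_cat /= -/(Rect s B).
  have -> : \big[setI/setT]_(i <- s) (w i @^-1` B' i) = Rect s B.
    by apply: eq_big_seq => i iS; rewrite /B' iS.
  have -> : \big[setI/setT]_(i <- iota (K * N) N) (w i @^-1` B' i) = Ek K.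
    by apply: eq_big_seq => i /disj /negbTE iS; rewrite /B' iS.
  by rewrite setIAC.
have KN : (K * N <= K.+1 * N)%N by rewrite leq_mul2r leqnSn orbT.
have Hs1 : forall i, i \in s -> (K * N <= i)%N.
  by move=> i /Hs; apply: leq_trans.
have Hs2 : forall i, i \in s ++ iota (K * N) N -> (K * N <= i)%N.
  move=> i; rewrite mem_cat => /orP [/Hs1 //|].
  by rewrite mem_iota => /andP [].
rewrite eqR (IH s B us HB Hs1) (IH _ B' us' HB' Hs2).
rewrite big_nat_recr //= (pr_Rect us' HB') big_cat /=.
have -> : \prod_(i <- s) pr (w i @^-1` B' i) = pr (Rect s B).
  by rewrite (pr_Rect us HB); apply: eq_big_seq => i iS; rewrite /B' iS.
have -> : \prod_(i <- iota (K * N) N) pr (w i @^-1` B' i) = pr (Ek K).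
  rewrite /Ek (pr_Rect (iota_uniq _ _) (fun i _ => Bborel i)).
  by apply: eq_big_seq => i /disj /negbTE iS; rewrite /B' iS.
ring.
Qed.

Lemma prFk K : pr (Fk K) = \prod_(0 <= k < K) (1 - pr (Ek k)).
Proof.
have := @claim K [::] Bb isT (fun _ _ => Bborel _) (fun i (h : i \in [::]) => ltac:(by [])).
rewrite /Rect big_nil setTI => ->.
by rewrite /pr probability_setT mul1r.
Qed.

End Prob.

Section Misc.
Context (R : realType).

Lemma enorm_continuous n : continuous (@enorm R n).
Proof.
have -> : @enorm R n = fun x => Num.sqrt (\sum_i (x i 0 * x i 0)).
  by apply: funext => x; rewrite /enorm; congr Num.sqrt; apply: eq_bigr => i _; rewrite expr2.
move=> x; apply: continuous_comp; last exact: sqrt_continuous.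
apply: (@continuous_big _ _ _ _ _ add_continuous) => i _ y.
by apply: continuousM; exact: coord_continuous.
Qed.

Lemma ball_borel n (c : 'cV[R]_n) (e : R) : borel_cv [set x | enorm (x - c) < e].
Proof.
apply: sub_sigma_algebra.
have -> : [set x | enorm (x - c) < e] = (fun x => enorm (x - c)) @^-1` [set y | y < e].
  by [].
apply: open_comp; last exact: open_lt.
move=> x _; apply: continuous_comp; last exact: enorm_continuous.
by apply: continuousB; [exact: cvg_id | exact: cst_continuous].
Qed.

Lemma bigsetI_mem (T : Type) (l : seq nat) (F : nat -> set T) s :
  (\big[setI/setT]_(k <- l) F k) s <-> (forall k, k \in l -> F k s).
Proof.
elim: l => [|x l IH]; first by rewrite big_nil; split.
rewrite big_cons; split.
  move=> [h1 /IH h2] k; rewrite in_cons => /orP [/eqP -> //|]; exact: h2.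
move=> h; split; first by apply: h; rewrite mem_head.
by apply/IH => k kl; apply: h; rewrite in_cons kl orbT.
Qed.

Lemma finmax (l : seq nat) (f : nat -> R) e : 0 < e ->
  (forall j, j \in l -> f j < e) ->
  exists dd, [/\ 0 <= dd, dd < e & forall j, j \in l -> f j <= dd].
Proof.
move=> e0; elim: l => [|x l IH] h.
  by exists 0; split => // j.
have [dd [d0 de dl]] : exists dd, [/\ 0 <= dd, dd < e & forall j, j \in l -> f j <= dd].
  by apply: IH => j jl; apply: h; rewrite in_cons jl orbT.
exists (Num.max dd (f x)); split.
- by rewrite le_max d0.
- by rewrite gt_max de h // mem_head.
- move=> j; rewrite in_cons => /orP [/eqP ->|/dl]; first by rewrite le_max lexx orbT.
  by move=> h'; rewrite le_max h'.
Qed.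

Lemma prod_iota_const (a n : nat) (c : R) : \prod_(j <- iota a n) c = c ^+ n.
Proof.
elim: n a => [|n IH] a; first by rewrite big_nil expr0.
by rewrite /= big_cons IH exprS.
Qed.

End Misc.
Unset Implicit Arguments.

Theorem theorem5
  (R : realType) (d : measure_display) (T : measurableType d)
  (P : probability T R)
  (nx p q r : nat)
  (thstar : 'cV[R]_p)
  (Pi_w : 'M[R]_(q, nx)) (pi_w : 'cV[R]_q)
  (w : nat -> T -> 'cV[R]_nx)
  (D : nat -> 'M[R]_(nx, p))
  (tau beta : R) (N_u : nat)
  (Omega : set 'cV[R]_nx) (rho : R) (p_w : R -> R)
  (M_Theta : 'M[R]_(r, p)) (mu0 : 'cV[R]_r)
  (mu : nat -> T -> 'cV[R]_r) :
  (* W is a compact polytope with pi_w > 0 *)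
  (forall k, 0 < pi_w k 0) ->
  compact [set x : 'cV[R]_nx | cv_le (Pi_w *m x) pi_w] ->
  (* the disturbances are independent random vectors *)
  (forall t, random_vector (w t)) ->
  mutually_independent P w ->
  (* persistent excitation *)
  0 < tau -> 0 < beta ->
  (Num.ceil (p%:R / nx%:R : R) <= N_u%:Z)%R ->
  (forall t, opnorm_le (D t) tau) ->
  (forall t, loewner_ge (\sum_(t <= j < t + N_u) (D j)^T *m D j) (beta%:M)) ->
  (* inexact disturbance bound *)
  compact Omega -> 0 < rho ->
  Omega `<=` [set x : 'cV[R]_nx | cv_le (Pi_w *m x) pi_w] ->
  [set x : 'cV[R]_nx | cv_le (Pi_w *m x) pi_w] `<=`
    [set x | exists2 o, Omega o & enorm (x - o) <= rho] ->
  (forall t s, Omega (w t s)) ->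
  (forall e : R, 0 < e -> 0 < p_w e <= 1) ->
  (forall w0, boundary Omega w0 -> forall e : R, 0 < e -> forall t,
     ((p_w e)%:E <= P [set s | (enorm (w t s - w0) < e)%R])%E) ->
  (* fixed-complexity parameter set *)
  (forall i, enorm (row i M_Theta)^T = 1) ->
  (forall m : 'cV[R]_r, bounded_cv (Theta_of M_Theta m)) ->
  Theta_of M_Theta mu0 thstar ->
  (* periodic update *)
  (forall s, mu 0%N s = mu0) ->
  (forall t s, (0 < t)%N -> ~~ (N_u %| t)%N -> mu t s = mu t.-1 s) ->
  (forall t s, (0 < t)%N -> (N_u %| t)%N -> forall i : 'I_r,
     is_max [set (M_Theta *m th) i 0 | th in
               Theta_of M_Theta (mu (t - N_u)%N s) `&`
               [set th | forall j, (t - N_u < j <= t)%N ->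
                  Delta_set Pi_w pi_w (D j.-1) thstar (w j.-1 s) th]]
            (mu t s i 0)) ->
  forall (eps : R) (th : 'cV[R]_p), 0 < eps ->
    Theta_of M_Theta mu0 th ->
    (exists i : 'I_r,
       eps + rho * N_u%:R * tau / beta <= (M_Theta *m (th - thstar)) i 0) ->
    forall t : nat,
      outer_prob_le P [set s | Theta_of M_Theta (mu t s) th]
        ((1 - p_w (eps * beta / (N_u%:R * tau)) ^+ N_u) ^+ (t %/ N_u)%N).
Proof.
move=> Hpi Wc wrv wind tau0 beta0 Hceil Hop HL Omc rho0 OmW WOm wOm pwb Hpw
  Mrow Mbd th0 mu0' mustep muupd eps th eps0 thT [i Hi] t.
set K := (t %/ N_u)%N.
have [K0|Kpos] := eqVneq K 0%N.
  rewrite K0 expr0; exists setT; first by split => //; exact: measurableT.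
  by rewrite probability_setT.
have N0 : (0 < N_u)%N.
  by rewrite lt0n; apply/negP => /eqP N0; rewrite /K N0 divn0 eqxx in Kpos.
set m : 'cV[R]_p := (row i M_Theta)^T.
have m1 : enorm m = 1 by exact: Mrow.
have nx0 : (0 < nx)%N.
  rewrite lt0n; apply/negP => /eqP nxe.
  have := loew_quad m (HL 0%N); rewrite Gdot -enorm_sq m1 expr1n mulr1.
  rewrite big1 => [|j _]; first by rewrite leNgt beta0.
  rewrite /dot; move: (D j *m m); rewrite nxe => x.
  by rewrite big_ord0.
have Om0 : Omega !=set0.
  have [s _] : [set: T] !=set0.
    apply/set0P/negP => /eqP h; have := probability_setT P.
    by rewrite h measure0 => /(congr1 fine)/eqP; rewrite /= eq_sym oner_eq0.
  by exists (w 0%N s).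
have [wf Hwf] := choice (bmin nx0 Omc Om0).
pose G k := \sum_(k * N_u <= j < k * N_u + N_u) (D j)^T *m D j.
pose vk k := invmx (G k) *m m.
have Gv k : G k *m vk k = m.
  by rewrite /vk mulKVmx //; exact: (loew_unit beta0 (HL (k * N_u)%N)).
pose w0 j := wf (D j *m vk (j %/ N_u)%N).
pose e := eps * beta / (N_u%:R * tau).
have Np : 0 < (N_u%:R : R) by rewrite ltr0n.
have e0 : 0 < e by rewrite /e divr_gt0 ?mulr_gt0.
pose Bb j := [set x : 'cV[R]_nx | enorm (x - w0 j) < e].
have Bborel j : borel_cv (Bb j) by exact: ball_borel.
pose A := Fk w N_u Bb K.
have mA : measurable A by exact: Fk_meas.
have mured : forall t s, mu t s = mu (t %/ N_u * N_u)%N s.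
  elim=> [|t' IH] s; first by rewrite div0n mul0n.
  have [dv|ndv] := boolP (N_u %| t'.+1)%N; first by rewrite divnK.
  by rewrite mustep //= IH (divnS _ N0) (negbTE ndv) add0n.
have mudec : forall k s, cv_le (mu (k.+1 * N_u)%N s) (mu (k * N_u)%N s).
  move=> k s i'.
  have t'0 : (0 < k.+1 * N_u)%N by rewrite muln_gt0 N0.
  have [[th' [hT _] <-] _] := muupd _ s t'0 (dvdn_mull _ (dvdnn _)) i'.
  by move: hT; rewrite /Theta_of /= mulSnr addnK; apply.
have mumono : forall k1 k2 s, (k1 <= k2)%N -> cv_le (mu (k2 * N_u)%N s) (mu (k1 * N_u)%N s).
  move=> k1 k2 s /subnKC <-; elim: (k2 - k1)%N => [|n IH]; first by rewrite addn0 => i'.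
  by move=> i'; rewrite addnS; apply: le_trans (IH i'); apply: mudec.
exists A; first split => //.
  move=> s /= Hth; apply/bigsetI_mem => k; rewrite mem_index_iota => /andP [_ kK] HE.
  have Hth' : Theta_of M_Theta (mu (k.+1 * N_u)%N s) th.
    move=> i'; apply: le_trans (Hth i') _; rewrite (mured t s).
    exact: mumono.
  have t'0 : (0 < k.+1 * N_u)%N by rewrite muln_gt0 N0.
  have [[th' [hT hD] heq] _] := muupd _ s t'0 (dvdn_mull _ (dvdnn _)) i.
  have := Hth' i; rewrite -heq /= !mxrow_dot -/m.
  apply/negP; rewrite -ltNge.
  rewrite mulSnr addnK in hD.
  have Hb : forall j, j \in iota (k * N_u) N_u -> enorm (w j s - w0 j) < e.
    by move: HE; rewrite /Ek /Rect => /bigsetI_mem.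
  have [dd [dd0 dde ddl]] := finmax e0 Hb.
  pose xj j := D j *m (thstar - th') + w j s.
  have Hex : forall j, exists o, (k * N_u <= j < k * N_u + N_u)%N ->
       Omega o /\ enorm (xj j - o) <= rho.
    move=> j; have [hj|hj] := boolP (k * N_u <= j < k * N_u + N_u)%N; last by exists 0.
    have hW : cv_le (Pi_w *m xj j) pi_w by exact: (hD j.+1).
    have [ob obO obe] := WOm _ hW.
    by exists ob.
  have [oj Hoj] := choice Hex.
  have Hj : forall j, (k * N_u <= j < k * N_u + N_u)%N ->
    [/\ D j *m (th' - thstar) = w j s - xj j, enorm (xj j - oj j) <= rho,
        enorm (w j s - w0 j) <= dd &
        dot (D j *m vk k) (w0 j) <= dot (D j *m vk k) (oj j)].
    move=> j hj; have [oO oe] := Hoj j hj.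
    have jk : (j %/ N_u)%N = k.
      case/andP: hj => h1 h2.
      rewrite -(subnKC h1) divnMDl // divn_small ?addn0 //.
      by rewrite ltn_subLR.
    split => //.
    - by rewrite /xj (addrC _ (w j s)) opprD addrA subrr add0r -mulmxN opprB.
    - by apply: ddl; rewrite mem_iota.
    - by have := (Hwf (D j *m vk (j %/ N_u)%N)).2 _ oO; rewrite /w0 jk.
  have := @core R nx p D (k * N_u)%N N_u tau beta rho e dd m (vk k) (th' - thstar)
    (fun j => w j s) w0 xj oj m1 beta0 tau0 N0 dde (ltW rho0) dd0 Hop
    (HL (k * N_u)%N) (Gv k) Hj.
  rewrite dotBr.
  rewrite mxrow_dot -/m dotBr in Hi.
  have key : N_u%:R * tau / beta * (e + rho) = eps + rho * N_u%:R * tau / beta.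
    by rewrite /e; field; rewrite ?mulf_neq0 ?gt_eqF.
  lra.
rewrite -/e (prE P mA) lee_fin /A prFk //.
have -> : (1 - p_w e ^+ N_u) ^+ K = \prod_(0 <= k < K) (1 - p_w e ^+ N_u).
  by rewrite prodr_const_nat subn0.
apply: ler_prod => k _; apply/andP; split.
  by rewrite subr_ge0 pr_le1 //; exact: Ek_meas.
rewrite lerD2l lerN2 /Ek (pr_Rect wrv wind (iota_uniq _ _) (fun j _ => Bborel j)).
rewrite -(prod_iota_const (k * N_u)); apply: ler_prod => j _.
have /andP [pw0 _] := pwb e e0.
rewrite (ltW pw0) /= -lee_fin -prE; last exact: wrv.
exact: (Hpw _ (Hwf _).1 e e0 j).
Qed.
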